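(* Let $(d_n)_{n\ge1}$ be a sequence of prime numbers. Then \[ \lambda(\{\mathsf a'_n=d_n\text{ for infinitely many }n\})=\begin{cases}1&\text{if }\sum_{n\ge1}\frac{1}{d_n^2}=\infty,\\ 0&\text{otherwise.}\end{cases} \]
   Context: $I=(0,1]$, $\lambda$ is Lebesgue measure on $I$, and $\mathsf a_n(x)$ denotes the $n$-th continued fraction digit of $x\in I$. $\mathbb P$ is the set of primes. The prime digits are $\mathsf a'_n(x):=\mathsf a_n(x)$ if $\mathsf a_n(x)\in\mathbb P$ and $\mathsf a'_n(x):=0$ otherwise. *)

(* Defs.v *)
From HB Require Import structures.
From mathcomp Require Import all_boot all_order all_algebra.
From mathcomp Require Import all_classical all_reals all_analysis.
Set Implicit Arguments. Unset Strict Implicit. Unset Printing Implicit Defensive.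
Import Order.TTheory GRing.Theory Num.Theory.
Local Open Scope ring_scope.

(* Gauss map on I = (0,1]: T x = 1/x - floor(1/x)  (with 1/0 = 0, so T 0 = 0). *)
Definition gauss (R : realType) (x : R) : R := x^-1 - (Num.floor (x^-1))%:~R.

(* n-th continued fraction digit (n >= 1): a_n(x) = floor(1 / T^(n-1) x).
   For rational x the expansion terminates and later digits are 0. *)
Definition cf_digit (R : realType) (n : nat) (x : R) : nat :=
  Num.trunc ((iter n.-1 (@gauss R) x)^-1).

Definition prime_digit (R : realType) (n : nat) (x : R) : nat :=
  if prime (cf_digit n x) then cf_digit n x else 0%N.

(* Main.v *)
Require Import Defs.
From HB Require Import structures.
From mathcomp Require Import all_boot all_order all_algebra.
From mathcomp Require Import all_classical all_reals all_analysis.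
From mathcomp Require Import zify ring lra.
Import Order.TTheory GRing.Theory Num.Theory.
Local Open Scope classical_set_scope.
Local Open Scope ring_scope.
Definition gs {R : realType} (c : seq nat) (y : R) : R :=
  foldr (fun (j : nat) z => (j%:R + z)^-1) y c.

Lemma cf_digit1 {R : realType} (x : R) : cf_digit 1 x = Num.truncn x^-1.
Proof. by []. Qed.

Lemma cf_digitS {R : realType} (i : nat) (x : R) :
  cf_digit i.+2 x = cf_digit i.+1 (gauss x).
Proof. by rewrite /cf_digit /= -iterSr. Qed.

Lemma gauss_step {R : realType} {x : R} : 0 < x ->
  x^-1 = (Num.truncn x^-1)%:R + gauss x /\ 0 <= gauss x < 1.
Proof.
move=> x0.
have xi0 : 0 <= x^-1 by rewrite invr_ge0 ltW.
have fl : Num.floor x^-1 = (Num.truncn x^-1)%:Z.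
  rewrite truncn_floor xi0 gez0_abs //.
  by rewrite floor_ge0.
have eg : gauss x = x^-1 - (Num.truncn x^-1)%:R by rewrite /gauss fl.
have := truncn_itv xi0.
rewrite eg => /andP[h1 h2]; split; first by rewrite addrC subrK.
apply/andP; split; first by rewrite subr_ge0.
by rewrite ltrBlDl -natr1 addrC in h2 *.
Qed.

Definition posseq (c : seq nat) := all (fun j => (0 < j)%N) c.

Lemma gs_cons {R : realType} j c (y : R) : gs (j :: c) y = (j%:R + gs c y)^-1.
Proof. by []. Qed.

Lemma inv_in01 {R : realType} {j : nat} {z : R} : (0 < j)%N -> 0 <= z ->
  0 < (j%:R + z)^-1 <= 1.
Proof.
move=> j0 z0; have j1 : 1 <= j%:R :> R by rewrite ler1n.
apply/andP; split; first by rewrite invr_gt0; lra.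
by rewrite invf_le1; lra.
Qed.

Lemma gs_ge0 {R : realType} c (y : R) : posseq c -> 0 <= y <= 1 -> 0 <= gs c y <= 1.
Proof.
elim: c => [//|j c IH] /= /andP[j0 pc] y01.
have /andP[h1 h2] := inv_in01 j0 (proj1 (andP (IH pc y01))).
by rewrite ltW.
Qed.

Lemma gs_fwd {R : realType} c (y : R) : posseq c -> 0 < y < 1 ->
  [/\ 0 < gs c y < 1, iter (size c) (@gauss R) (gs c y) = y &
      forall i, (i < size c)%N -> cf_digit i.+1 (gs c y) = nth 0%N c i].
Proof.
move=> + y01; elim: c => [_|j c IH /= /andP[j0 pc]]; first by split.
have [/andP[z0 z1] itz dz] := IH pc.
move: (gs c y) z0 z1 itz dz => z z0 z1 itz dz.
have j1 : 1 <= j%:R :> R by rewrite ler1n.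
have xpos : 0 < (j%:R + z)^-1 by rewrite invr_gt0; lra.
have xi : ((j%:R + z)^-1)^-1 = j%:R + z by rewrite invrK.
have tr : Num.truncn ((j%:R + z)^-1)^-1 = j.
  rewrite xi; apply: truncn_def; apply/andP; split; first lra.
  by rewrite -natr1; lra.
have gx : gauss (j%:R + z)^-1 = z.
  have [e _] := gauss_step xpos.
  move: e; rewrite tr xi => e; apply: (addrI (j%:R)); by rewrite -e.
split.
- apply/andP; split => //; rewrite invf_lt1 //; lra.
- by rewrite -iterS iterSr gx.
- case=> [_|i]; first by rewrite cf_digit1 tr.
  by rewrite ltnS cf_digitS gx => /dz.
Qed.

Lemma gs_bwd {R : realType} c (x : R) : posseq c -> 0 < x <= 1 ->
  (forall i, (i < size c)%N -> cf_digit i.+1 x = nth 0%N c i) ->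
  let y := iter (size c) (@gauss R) x in
  [/\ x = gs c y, 0 <= y <= 1 & (c != [::] -> y < 1)].
Proof.
elim: c x => [|j c IH] x /=; first by move=> _ /andP[/ltW -> ->].
move=> /andP[j0 pc] /andP[x0 x1] dx.
have [e /andP[g0 g1]] := gauss_step x0.
have tj : Num.truncn x^-1 = j by rewrite -cf_digit1 (dx 0%N).
rewrite -iterS iterSr.
case: c IH pc dx => [|j' c'] IH pc dx.
  rewrite /= g0 (ltW g1); split => //.
  by rewrite -tj -e invrK.
have gpos : 0 < gauss x.
  rewrite lt_neqAle g0 andbT; apply/negP => /eqP g0E.
  have := dx 1%N isT; rewrite cf_digitS cf_digit1 -g0E invr0 truncn0 /=.
  by move=> h; move: pc; rewrite /= -h.
have g01 : 0 < gauss x <= 1 by rewrite gpos ltW.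
have dg : forall i, (i < size (j' :: c'))%N -> cf_digit i.+1 (gauss x) = nth 0%N (j' :: c') i.
  by move=> i hi; rewrite -cf_digitS; apply: (dx i.+1).
have [IH1 IH2 IH3] := IH (gauss x) pc g01 dg.
split => //.
- transitivity (j%:R + gauss x)^-1; first by rewrite -tj -e invrK.
  by rewrite {1}IH1.
Qed.

Fixpoint mob (c : seq nat) : nat * nat * nat * nat :=
  match c with
  | [::] => (0%N, 1%N, 1%N, 0%N)
  | j :: c' => let: (p, p', q, q') := mob c' in (q, q', (j * q + p)%N, (j * q' + p')%N)
  end.

Lemma mob_inv c : posseq c -> let: (p, p', q, q') := mob c in
  [/\ (q' <= q)%N, (q' + p' <= q + p)%N, (1 <= q)%N &
      ((p * q' + 1 = p' * q) \/ (p' * q + 1 = p * q'))%N].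
Proof.
elim: c => [|j c IH] /=; first by split => //; left.
move=> /andP[j0 /IH]; case: (mob c) => [[[p p'] q] q'] [h1 h2 h3 h4].
split; try nia.
Qed.

Lemma gs_mob {R : realType} c (y : R) : posseq c -> 0 <= y ->
  let: (p, p', q, q') := mob c in
  gs c y = (p%:R + p'%:R * y) / (q%:R + q'%:R * y).
Proof.
move=> + y0; elim: c => [|j c IH] /=; first by move=> _; rewrite mul1r add0r mul0r addr0 divr1.
move=> /andP[j0 pc]; have := IH pc; have := mob_inv c pc.
case: (mob c) => [[[p p'] q] q'] [h1 h2 h3 h4] ->.
have q1 : 1 <= q%:R :> R by rewrite ler1n.
have q'0 : 0 <= q'%:R :> R by [].
have p0 : 0 <= p%:R :> R by [].
have p'0 : 0 <= p'%:R :> R by [].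
have j1 : 1 <= j%:R :> R by rewrite ler1n.
have D0 : 0 < q%:R + q'%:R * y :> R by have := mulr_ge0 q'0 y0; lra.
rewrite !natrD !natrM.
have N0 : 0 < j%:R * q%:R + p%:R + (j%:R * q'%:R + p'%:R) * y :> R.
  have := mulr_ge0 (mulr_ge0 (ler0n _ j) q'0) y0.
  have := mulr_ge0 p'0 y0. have := ler_pM (ler0n _ 1) (ler0n _ 1) j1 q1. nra.
have E : j%:R + (p%:R + p'%:R * y) / (q%:R + q'%:R * y) =
  (j%:R * q%:R + p%:R + (j%:R * q'%:R + p'%:R) * y) / (q%:R + q'%:R * y).
  by field; apply: lt0r_neq0.
by rewrite E invf_div.
Qed.

Lemma gs_lin {R : realType} c : posseq c -> exists s a b : R,
  [/\ s = 1 \/ s = -1, 1 <= a, 0 <= b <= a &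
   forall u v, 0 <= u -> 0 <= v ->
     gs c u - gs c v = s * (u - v) / ((a + b * u) * (a + b * v))].
Proof.
move=> pc.
have G : forall y : R, 0 <= y -> let: (p, p', q, q') := mob c in
  gs c y = (p%:R + p'%:R * y) / (q%:R + q'%:R * y).
  by move=> y y0; apply: gs_mob.
move: G; have := mob_inv c pc; case: (mob c) => [[[p p'] q] q'] [h1 h2 h3 h4] G.
have q1 : 1 <= q%:R :> R by rewrite ler1n.
have qq : q'%:R <= q%:R :> R by rewrite ler_nat.
have hs : exists s : R, (s = 1 \/ s = -1) /\ p'%:R * q%:R - p%:R * q'%:R = s.
  case: h4 => h4; [exists 1; split; [by left|] | exists (-1); split; [by right|]].
    by rewrite -!natrM -h4 natrD; ring.
  by rewrite -!natrM -h4 natrD; ring.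
case: hs => s [hs1 hs2].
exists s, q%:R, q'%:R; split => //; first by rewrite ler0n.
move=> u v u0 v0; rewrite (G u u0) (G v v0).
have Du : 0 < q%:R + q'%:R * u :> R by have := mulr_ge0 (ler0n R q') u0; lra.
have Dv : 0 < q%:R + q'%:R * v :> R by have := mulr_ge0 (ler0n R q') v0; lra.
by rewrite -hs2; field; rewrite (lt0r_neq0 Du) (lt0r_neq0 Dv).
Qed.

Lemma gs_surj {R : realType} c : posseq c -> forall x : R,
  (gs c 0 < x < gs c 1) \/ (gs c 1 < x < gs c 0) -> exists y, 0 < y < 1 /\ gs c y = x.
Proof.
elim: c => [|j c IH] /=.
  move=> _ x [h|h]; first by exists x.
  by exfalso; move: h; lra.
move=> /andP[j0 pc] x.
have /andP[a00 a01] := gs_ge0 c (0:R) pc (ltac:(by rewrite lexx ler01)).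
have /andP[a10 a11] := gs_ge0 c (1:R) pc (ltac:(by rewrite lexx ler01)).
have j1 : 1 <= j%:R :> R by rewrite ler1n.
set a0 := gs c 0 in a00 a01 *; set a1 := gs c 1 in a10 a11 *.
have P0 : (j%:R + a0) \is Num.pos by rewrite posrE; lra.
have P1 : (j%:R + a1) \is Num.pos by rewrite posrE; lra.
move=> hx.
have xpos : 0 < x.
  case: hx => /andP[h1 h2]; apply: lt_trans h1; rewrite invr_gt0; lra.
have Px : x \is Num.pos by rewrite posrE.
have Pxi : x^-1 \is Num.pos by rewrite posrE invr_gt0.
have k1 : forall a, (j%:R + a) \is Num.pos -> ((j%:R + a)^-1 < x) = (x^-1 < j%:R + a).
  by move=> a Pa; rewrite -(ltf_pV2 Pa Pxi) invrK.
have k2 : forall a, (j%:R + a) \is Num.pos -> (x < (j%:R + a)^-1) = (j%:R + a < x^-1).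
  by move=> a Pa; rewrite -(ltf_pV2 Pxi Pa) invrK.
have hz : (a0 < x^-1 - j%:R < a1) \/ (a1 < x^-1 - j%:R < a0).
  case: hx => /andP[h1 h2]; [right|left]; move: h1 h2;
    rewrite ?(k1 _ P0) ?(k1 _ P1) ?(k2 _ P0) ?(k2 _ P1) => h1 h2;
    apply/andP; split; lra.
have [y [y01 ey]] := IH pc _ hz.
exists y; split => //; rewrite ey addrC subrK invrK //.
Qed.

Definition cyl {R : realType} (c : seq nat) : set R :=
  [set x | 0 < x <= 1 /\ forall i, (i < size c)%N -> cf_digit i.+1 x = nth 0%N c i].

Lemma gs_between {R : realType} c (y : R) : posseq c -> 0 <= y <= 1 ->
  (gs c 0 <= gs c y <= gs c 1) \/ (gs c 1 <= gs c y <= gs c 0).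
Proof.
move=> pc /andP[y0 y1]; have [s [a [b [hs a1 /andP[b0 ba] L]]]] := gs_lin (R:=R) c pc.
have e1 := L y 0 y0 (lexx 0); have e2 := L 1 y ler01 y0.
have D1 : 0 < (a + b * y) * (a + b * 0) by apply: mulr_gt0; nra.
have D2 : 0 < (a + b * 1) * (a + b * y) by apply: mulr_gt0; nra.
have q1 : 0 <= (y - 0) / ((a + b * y) * (a + b * 0)) by apply: divr_ge0; lra.
have q2 : 0 <= (1 - y) / ((a + b * 1) * (a + b * y)) by apply: divr_ge0; lra.
rewrite -mulrA in e1; rewrite -mulrA in e2.
case: hs => -> in e1 e2; [left|right]; apply/andP; split; nra.
Qed.

Lemma cyl_sandwich {R : realType} c : posseq c -> exists a b : R,
  [/\ a <= b, b - a = `|gs c 1 - gs c 0|,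
      [set` `]a, b[] `<=` cyl c & cyl c `<=` [set` `[a, b]]].
Proof.
move=> pc.
have H : forall a b : R, a <= b -> ((a = gs c 0 /\ b = gs c 1) \/ (a = gs c 1 /\ b = gs c 0)) ->
  [/\ a <= b, b - a = `|gs c 1 - gs c 0|,
      [set` `]a, b[] `<=` cyl c & cyl c `<=` [set` `[a, b]]].
  move=> a b ab hab; split => //.
  - by case: hab ab => -[-> ->] ab; [rewrite ger0_norm ?subr_ge0 | rewrite distrC ger0_norm ?subr_ge0].
  - move=> x; rewrite /= in_itv /= => hx.
    have hx' : (gs c 0 < x < gs c 1) \/ (gs c 1 < x < gs c 0) by case: hab => -[<- <-]; [left|right].
    have [y [y01 <-]] := gs_surj c pc _ hx'.
    have [/andP[g0 g1] _ dg] := gs_fwd c y pc y01.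
    by split => //; rewrite g0 ltW.
  - move=> x [x01 dx]; rewrite /= in_itv /=.
    have [ex /andP[y0 y1] _] := gs_bwd c x pc x01 dx.
    have := gs_between c _ pc (ltac:(by rewrite y0 y1) : 0 <= iter (size c) (@gauss R) x <= 1).
    rewrite -ex; case: hab ab => -[-> ->] ab [] // /andP[h1 h2]; apply/andP; split; lra.
move: H; have [h|h] := lerP (gs c 0) (gs c 1) => H.
  by exists (gs c 0), (gs c 1); exact: (H _ _ h (or_introl (conj erefl erefl))).
by exists (gs c 1), (gs c 0); exact: (H _ _ (ltW h) (or_intror (conj erefl erefl))).
Qed.

Lemma cyl_measure {R : realType} c : posseq c ->
  measurable (cyl c : set R) /\
  lebesgue_measure (cyl c : set R) = (`|gs c 1 - gs c 0|)%:E.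
Proof.
move=> pc; have [a [b [ab eab Hin Hout]]] := cyl_sandwich (R:=R) c pc.
set O : set R := [set` `]a, b[].
have E : cyl c = O `|` (cyl c `\` O).
  by rewrite setDUK.
have Rsub : cyl c `\` O `<=` [set a] `|` [set b].
  move=> x [/Hout]; rewrite /O /= !in_itv /= => /andP[h1 h2] h3.
  case: (ltgtP a x) h1 => // hax _; last by left.
  case: (ltgtP x b) h2 => // hxb _; last by right.
  by exfalso; apply: h3; rewrite hax hxb.
have Rc : countable (cyl c `\` O).
  apply: sub_countable (subset_card_le Rsub) _.
  by apply: finite_set_countable; rewrite finite_setU; split; apply: finite_set1.
have Rm : measurable (cyl c `\` O) by apply: countable_measurable => // t; exact: measurable_set1.
have Om : measurable O by exact: measurable_itv.
have Cm : measurable (cyl c : set R) by rewrite E; exact: measurableU.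
split => //.
rewrite E measureU //; last by rewrite setDIK.
change (lebesgue_measure O + lebesgue_measure (cyl c `\` O) = `|gs c 1 - gs c 0|%:E)%E.
rewrite (countable_lebesgue_measure0 Rc) adde0 /O lebesgue_measure_itv /= lte_fin -eab.
have [hab|hab|->] := ltgtP a b.
- by rewrite -EFinD.
- by exfalso; move: ab; rewrite leNgt hab.
- by rewrite subrr.
Qed.

Lemma ratio_ineq {R : realType} (a b K : R) : 1 <= a -> 0 <= b -> b <= a -> 1 <= K ->
  let u := (K + 1)^-1 in let v := K^-1 in
  let X := (a + b * u) * (a + b * v) in let Y := (a + b * 1) * (a + b * 0) in
  (v - u) / X <= 2 * (K ^+ 2)^-1 * (1 / Y) /\
  (4 * K ^+ 2)^-1 * (1 / Y) <= (v - u) / X.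
Proof.
move=> a1 b0 ba K1 u v X Y.
have K0 : 0 < K by lra.
have u0 : 0 < u by rewrite invr_gt0; lra.
have v0 : 0 < v by rewrite invr_gt0.
have uK : u * (K + 1) = 1 by rewrite mulVf //; lra.
have vK : v * K = 1 by rewrite mulVf //; lra.
have vu : v - u = u * v.
  rewrite /u /v; field; apply/andP; split; apply: lt0r_neq0 => //; lra.
have uv : u <= v by nra.
have v1 : v <= 1 by nra.
have v2u : v <= 2 * u by nra.
have Kv : (K ^+ 2)^-1 = v ^+ 2 by rewrite exprVn.
have bu0 : 0 <= b * u by apply: mulr_ge0 => //; exact: ltW.
have bv0 : 0 <= b * v by apply: mulr_ge0 => //; exact: ltW.
have bu1 : b * u <= b by rewrite ler_piMr //; lra.
have bv1 : b * v <= b by rewrite ler_piMr //; lra.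
have X0 : a ^+ 2 <= X by rewrite /X expr2; nra.
have X1 : X <= (a + b) ^+ 2 by rewrite /X expr2; nra.
have Ye : Y = a * (a + b) by rewrite /Y; ring.
have Y0 : 0 < Y by rewrite Ye; nra.
have Xp : 0 < X by nra.
split.
- rewrite ler_pdivrMr // Kv mul1r.
  rewrite (_ : 2 * v ^+ 2 * Y^-1 * X = (2 * v ^+ 2 * X) / Y); last by rewrite mulrAC.
  rewrite ler_pdivlMr // vu.
  have hY : Y <= 2 * a ^+ 2 by rewrite Ye expr2; nra.
  have t1 : u * v * Y <= v ^+ 2 * Y by apply: ler_wpM2r; [lra| rewrite expr2; nra].
  have t2 : v ^+ 2 * Y <= v ^+ 2 * (2 * a ^+ 2) by apply: ler_wpM2l => //; rewrite expr2; nra.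
  have t3 : v ^+ 2 * (2 * a ^+ 2) <= 2 * v ^+ 2 * X.
    have v20 : 0 <= v ^+ 2 by rewrite expr2; nra.
    have := ler_wpM2l v20 X0; lra.
  lra.
- rewrite ler_pdivlMr //.
  have E : (4 * K ^+ 2)^-1 * (1 / Y) * X = (v ^+ 2 * X) / (4 * Y).
    rewrite /v; field; rewrite (lt0r_neq0 Y0) (lt0r_neq0 K0) //.
  rewrite E ler_pdivrMr; last lra.
  rewrite vu.
  have hab : (a + b) ^+ 2 <= 2 * (a * (a + b)) by rewrite expr2; nra.
  have hY : X <= 2 * Y by rewrite Ye; lra.
  have v20 : 0 <= v ^+ 2 by rewrite expr2; nra.
  have t1 : v ^+ 2 * X <= v ^+ 2 * (2 * Y) by apply: ler_wpM2l.
  have t2 : v ^+ 2 <= v * (2 * u) by rewrite expr2; apply: ler_wpM2l => //; lra.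
  have t3 : v ^+ 2 * (2 * Y) <= v * (2 * u) * (2 * Y) by apply: ler_wpM2r => //; lra.
  lra.
Qed.

Lemma gs_rcons {R : realType} c k (y : R) : gs (rcons c k) y = gs c ((k%:R + y)^-1).
Proof. by rewrite /gs foldr_rcons. Qed.

Lemma posseq_rcons c k : posseq (rcons c k) = posseq c && (0 < k)%N.
Proof. by rewrite /posseq all_rcons andbC. Qed.

Lemma cyl_ratio {R : realType} c k : posseq c -> (0 < k)%N ->
  `|gs (rcons c k) 1 - gs (rcons c k) 0| <= 2 * (k%:R ^+ 2)^-1 * `|gs c 1 - gs c 0| :> R /\
  (4 * k%:R ^+ 2)^-1 * `|gs c 1 - gs c 0| <= `|gs (rcons c k) 1 - gs (rcons c k) 0| :> R.
Proof.
move=> pc k0; rewrite !gs_rcons addr0.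
have [s [a [b [hs a1 /andP[b0 ba] L]]]] := gs_lin (R:=R) c pc.
have K1 : 1 <= k%:R :> R by rewrite ler1n.
have := ratio_ineq a b k%:R a1 b0 ba K1 => /=.
have u0 : 0 <= (k%:R + 1)^-1 :> R by rewrite invr_ge0; lra.
have v0 : 0 <= (k%:R)^-1 :> R by rewrite invr_ge0; lra.
rewrite (L _ _ u0 v0) (L _ _ ler01 (lexx 0)).
have sn : `|s| = 1 by case: hs => ->; rewrite ?normrN normr1.
have uv : (k%:R + 1)^-1 <= (k%:R)^-1 :> R by rewrite lef_pV2 ?posrE; lra.
have Xp : 0 < (a + b * (k%:R + 1)^-1) * (a + b * k%:R^-1) :> R.
  apply: mulr_gt0; have := mulr_ge0 b0 u0; have := mulr_ge0 b0 v0; lra.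
have Yp : 0 < (a + b * 1) * (a + b * 0) :> R by apply: mulr_gt0; lra.
rewrite -!mulrA !normrM sn !mul1r.
have nX : `|((a + b / (k%:R + 1)) * (a + b / k%:R))^-1| = ((a + b / (k%:R + 1)) * (a + b / k%:R))^-1.
  by rewrite gtr0_norm // invr_gt0.
have nY : `|((a + b * 1) * (a + b * 0))^-1| = ((a + b * 1) * (a + b * 0))^-1.
  by rewrite gtr0_norm // invr_gt0.
rewrite nX nY subr0 normr1 mul1r.
by rewrite distrC ger0_norm ?subr_ge0.
Qed.

Definition dig {R : realType} (M : nat) (x : R) : seq nat :=
  [seq cf_digit i.+1 x | i <- iota 0 M].

Lemma size_dig {R : realType} M (x : R) : size (dig M x) = M.
Proof. by rewrite size_map size_iota. Qed.

Lemma nth_dig {R : realType} M (x : R) i : (i < M)%N -> nth 0%N (dig M x) i = cf_digit i.+1 x.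
Proof. by move=> iM; rewrite (nth_map 0%N) ?size_iota // nth_iota. Qed.

Lemma digS {R : realType} M (x : R) : dig M.+1 x = rcons (dig M x) (cf_digit M.+1 x).
Proof. by rewrite /dig -{1}addn1 iotaD map_cat add0n cats1. Qed.

Lemma cylE {R : realType} c (x : R) : cyl c x <-> (0 < x <= 1 /\ dig (size c) x = c).
Proof.
split => -[x01 h]; split => //.
  apply: (@eq_from_nth _ 0%N); rewrite size_dig // => i iM.
  by rewrite nth_dig // h.
by move=> i ic; rewrite -h nth_dig.
Qed.

Definition ext (c : seq nat) (e : option nat) := if e is Some k then rcons c k else c.

Definition Bset {R : realType} (P : seq nat -> Prop) M (e : option nat) : set R :=
  [set x | 0 < x <= 1 /\ P (dig M x) /\ (if e is Some k then cf_digit M.+1 x = k else True)].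

Definition wt {R : realType} (P : seq nat -> Prop) M e (i : nat) : \bar R :=
  match pickle_inv i : option (seq nat) with
  | Some c => if (size c == M) && posseq c && `[< P c >] then
                lebesgue_measure (cyl (ext c e) : set R) else 0%E
  | None => 0%E
  end.

Lemma cyl_ext {R : realType} c e (x : R) : cyl (ext c e) x <->
  (0 < x <= 1 /\ dig (size c) x = c /\ (if e is Some k then cf_digit (size c).+1 x = k else True)).
Proof.
case: e => [k|] /=; rewrite cylE; last by split => [[? ?]|[? [? ?]]].
rewrite size_rcons digS; split.
  by move=> [x01 /eqP]; rewrite eqseq_rcons => /andP[/eqP -> /eqP ->].
by move=> [x01 [-> ->]].
Qed.

Definition okext (e : option nat) : bool := if e is Some k then (0 < k)%N else true.

Lemma posseq_ext c e : okext e -> posseq c -> posseq (ext c e).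
Proof. by case: e => [k|] //= k0 pc; rewrite posseq_rcons pc k0. Qed.

Lemma zero_digit_gs {R : realType} M (x : R) : 0 < x <= 1 -> ~~ posseq (dig M x) ->
  exists c : seq nat, x = gs c 0.
Proof.
move=> x01 npd.
set s := dig M x.
have hs : has (fun j => j == 0)%N s.
  by apply/hasP; move: npd => /allPn [j js j0]; exists j => //; rewrite lt0n negbK in j0.
set m := find (fun j => j == 0)%N s.
have mM : (m < M)%N by rewrite -(size_dig M x) -has_find.
exists (take m s).
have pc : posseq (take m s).
  apply/(all_nthP 0%N) => i; rewrite size_take -has_find hs => im.
  rewrite nth_take // lt0n; have := before_find 0%N im; by move=> ->.
have dc : forall i, (i < size (take m s))%N -> cf_digit i.+1 x = nth 0%N (take m s) i.
  move=> i; rewrite size_take -has_find hs => im.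
  by rewrite nth_take // /s nth_dig // (ltn_trans im mM).
have [ex /andP[y0 y1] _] := gs_bwd _ _ pc x01 dc.
have zm : cf_digit m.+1 x = 0%N by rewrite -(nth_dig M) //; apply/eqP; exact: (nth_find 0%N hs).
have sz : size (take m s) = m by rewrite size_take -has_find hs.
move: ex y0 y1; rewrite sz => ex y0 y1.
suff E : iter m (@gauss R) x = 0 by rewrite ex E.
move: zm; rewrite /cf_digit /= => zm.
apply/eqP; rewrite eq_le y0 andbT; apply/negP => yp.
move/negP: yp; rewrite -ltNge => yp.
have h1 : (1 <= (iter m (@gauss R) x)^-1) by rewrite invf_ge1.
by move: h1; rewrite -truncn_gt0 zm.
Qed.

Lemma Bset_dec {R : realType} P M e : okext e ->
  measurable (Bset P M e : set R) /\
  lebesgue_measure (Bset P M e : set R) = (\sum_(0 <= i <oo) wt P M e i)%E.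
Proof.
move=> He.
pose F i : set R := match pickle_inv i : option (seq nat) with
  | Some c => if (size c == M) && posseq c && `[< P c >] then cyl (ext c e) else set0
  | None => set0 end.
have Fm : forall i, measurable (F i).
  move=> i; rewrite /F; case: pickle_inv => [c|]; last exact: measurable0.
  case: ifP => [/andP[/andP[_ pc] _]|_]; last exact: measurable0.
  by have [h _] := cyl_measure (R:=R) _ (posseq_ext c e He pc).
have FB : forall i, F i `<=` Bset P M e.
  move=> i x; rewrite /F; case: pickle_inv => [c|] //; case: ifP => // /andP[/andP[/eqP sc _] /asboolP Pc].
  move=> /cyl_ext [x01 [dx ex]]; split => //; rewrite -sc dx; split => //.
have Ftriv : trivIset setT F.
  move=> i j _ _ [x [Fi Fj]].
  have key : forall l, F l x -> pickle_inv l = Some (dig M x).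
    move=> l; rewrite /F; case: pickle_inv => [c|] //; case: ifP => // /andP[/andP[/eqP sc _] _].
    by move=> /cyl_ext [_ [dx _]]; rewrite -sc dx.
  have := pickle_invK (T := seq nat) i; have := pickle_invK (T := seq nat) j; rewrite (key _ Fi) (key _ Fj) /=.
  by move=> <- <-.
have Zc : countable (Bset P M e `\` \bigcup_i F i).
  apply: sub_countable (subset_card_le (B := [set gs c (0:R) | c in [set: seq nat]]) _) _; last first.
    exact: sub_countable (card_image_le _ _) (countableP _).
  move=> x [[x01 [Px ex]] nF].
  case: (boolP (posseq (dig M x))) => pd; last first.
    by have [c ->] := zero_digit_gs M x x01 pd; exists c.
  exfalso; apply: nF; exists (pickle (dig M x)) => //.
  rewrite /F pickleK_inv size_dig eqxx pd /= asboolT //.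
  apply/cyl_ext; split => //; rewrite size_dig; split => //.
have Zm : measurable (Bset P M e `\` \bigcup_i F i).
  by apply: countable_measurable => // t; exact: measurable_set1.
have Um : measurable (\bigcup_i F i) by exact: bigcupT_measurable.
have E : Bset P M e = \bigcup_i F i `|` (Bset P M e `\` \bigcup_i F i).
  by rewrite setDUK // => x [i _]; exact: FB.
split; first by rewrite E; exact: measurableU.
rewrite E measureU //; last by rewrite setDIK.
change (lebesgue_measure (\bigcup_i F i) + lebesgue_measure (Bset P M e `\` \bigcup_i F i) =
  \sum_(0 <= i <oo) wt P M e i)%E.
rewrite (countable_lebesgue_measure0 Zc) adde0 measure_semi_bigcup //.
apply: eq_eseriesr => i _; rewrite /F /wt; case: pickle_inv => [c|]; last exact: measure0.
by case: ifP => // _; exact: measure0.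
Qed.

Lemma wt_ge0 {R : realType} P M e i : (0 <= wt (R:=R) P M e i)%E.
Proof. by rewrite /wt; case: pickle_inv => [c|] //; case: ifP. Qed.

Lemma Bset_ratio {R : realType} P M k : (0 < k)%N ->
  (lebesgue_measure (Bset P M (Some k) : set R) <=
     (2 * (k%:R ^+ 2)^-1)%:E * lebesgue_measure (Bset P M None : set R))%E /\
  (((4 * k%:R ^+ 2)^-1)%:E * lebesgue_measure (Bset P M None : set R) <=
     lebesgue_measure (Bset P M (Some k) : set R))%E.
Proof.
move=> k0.
have [_ ->] := Bset_dec (R:=R) P M (Some k) k0.
have [_ ->] := Bset_dec (R:=R) P M None isT.
have K : 0 <= (k%:R ^+ 2)^-1 :> R by rewrite invr_ge0 exprn_ge0.
rewrite -!nneseriesZl; try by move=> *; exact: wt_ge0.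
split; apply: lee_nneseries; try by move=> *; exact: wt_ge0.
- move=> n _; rewrite /wt; case: pickle_inv => [c|]; last by rewrite mule0.
  case: ifP => [/andP[/andP[_ pc] _]|_]; last by rewrite mule0.
  have [_ ->] := cyl_measure (R:=R) _ (posseq_ext c (Some k) k0 pc).
  have [_ ->] := cyl_measure (R:=R) _ pc.
  by rewrite -EFinM lee_fin; exact: (cyl_ratio c k pc k0).1.
- move=> n _ _; apply: mule_ge0; last exact: wt_ge0.
  by rewrite lee_fin invr_ge0 mulr_ge0 // exprn_ge0.
- move=> n _; rewrite /wt; case: pickle_inv => [c|]; last by rewrite mule0.
  case: ifP => [/andP[/andP[_ pc] _]|_]; last by rewrite mule0.
  have [_ ->] := cyl_measure (R:=R) _ (posseq_ext c (Some k) k0 pc).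
  have [_ ->] := cyl_measure (R:=R) _ pc.
  by rewrite -EFinM lee_fin; exact: (cyl_ratio c k pc k0).2.
Qed.

Lemma Bset_unit {R : realType} M :
  lebesgue_measure (Bset (fun _ => True) M None : set R) = 1%E.
Proof.
have -> : (Bset (fun _ => True) M None : set R) = [set` `]0, 1]].
  apply/seteqP; split => x /=; rewrite in_itv /=; first by case.
  by move=> h; split.
by rewrite lebesgue_measure_itv /= lte_fin ltr01 -EFinD subr0.
Qed.

Lemma Bset_le1 {R : realType} P M e : okext e ->
  (lebesgue_measure (Bset P M e : set R) <= 1)%E.
Proof.
move=> He; rewrite -(Bset_unit (R:=R) M).
apply: le_measure; rewrite ?inE.
- exact: (proj1 (Bset_dec P M e He)).
- exact: (proj1 (Bset_dec (fun _ => True) M None isT)).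
- by move=> x [x01 _].
Qed.

Lemma prime_digitE {R : realType} (d : nat -> nat) n (x : R) : prime (d n) ->
  (prime_digit n x = d n) <-> (cf_digit n x = d n).
Proof.
move=> pd; rewrite /prime_digit; case: ifP => pc; first by [].
split => h; first by move: pd; rewrite -h.
by move: pc; rewrite h pd.
Qed.

Definition Gev {R : realType} (d : nat -> nat) (N n : nat) : set R :=
  if (N <= n)%N && (1 <= n)%N then Bset (fun _ => True) n.-1 (Some (d n)) else set0.

Lemma Gev_meas {R : realType} (d : nat -> nat) N n :
  (forall n, (1 <= n)%N -> prime (d n)) -> measurable (Gev (R:=R) d N n).
Proof.
move=> hd; rewrite /Gev; case: ifP => [/andP[_ n1]|_]; last exact: measurable0.
apply: (proj1 (Bset_dec _ _ _ _)); rewrite /okext prime_gt0 //; exact: hd.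
Qed.

Lemma target_eq {R : realType} (d : nat -> nat) :
  (forall n, (1 <= n)%N -> prime (d n)) ->
  [set x : R | 0 < x <= 1 /\
       forall N : nat, exists n : nat, (N <= n)%N /\ (1 <= n)%N /\
         prime_digit n x = d n] = \bigcap_N \bigcup_n Gev d N n.
Proof.
move=> hd; apply/seteqP; split => x /=.
  move=> [x01 H] N _; have [n [Nn [n1 pn]]] := H N.
  exists n => //; rewrite /Gev Nn n1 /=; split => //; split => //.
  by rewrite prednK //; apply/prime_digitE => //; exact: hd.
move=> H; have [n _] := H 0%N I; rewrite /Gev; case: ifP => // /andP[_ n1] [x01 _].
split => // N; have [m _] := H N I; rewrite /Gev; case: ifP => // /andP[Nm m1] [_ [_ em]].
exists m; split => //; split => //; apply/prime_digitE; first exact: hd.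
by move: em; rewrite prednK.
Qed.

Lemma conv_case {R : realType} (d : nat -> nat) :
  (forall n, (1 <= n)%N -> prime (d n)) ->
  (\sum_(1 <= n <oo) (((d n)%:R ^+ 2)^-1 : R)%:E != +oo)%E ->
  lebesgue_measure (\bigcap_N \bigcup_n Gev (R:=R) d N n) = 0%E.
Proof.
move=> hd hs.
set S := \bigcap_N \bigcup_n Gev (R:=R) d N n.
pose f n := ((((d n)%:R ^+ 2)^-1 : R)%:E).
have f0 : forall n, (0 <= f n)%E by move=> n; rewrite /f lee_fin invr_ge0 exprn_ge0.
have Sm : measurable S.
  by apply: bigcapT_measurable => N; apply: bigcupT_measurable => n; exact: Gev_meas.
have bound : forall N, (1 <= N)%N -> (lebesgue_measure S <= 2%:E * \sum_(N <= n <oo) f n)%E.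
  move=> N N1.
  apply: le_trans (@measure_sigma_subadditive_tail _ _ _ lebesgue_measure S
    (Gev d 1) N (fun n => Gev_meas d 1 n hd) Sm _) _.
    move=> x Sx; have [n _] := Sx N I.
    rewrite /Gev; case: ifP => // /andP[Nn n1] Bx.
    exists n; first by move=> /= h; move: Nn; rewrite leqNgt h.
    by rewrite /Gev n1.
  rewrite -nneseriesZl; last by move=> *; exact: f0.
  apply: lee_nneseries => [n _ _|n _]; first exact: measure_ge0.
  rewrite /Gev /=; case: ifP => [n1|_]; last first.
    by rewrite measure0; apply: mule_ge0; [rewrite lee_fin | exact: f0].
  have pn : (0 < d n)%N by apply: prime_gt0; apply: hd; case/andP: n1.
  have [h _] := Bset_ratio (R:=R) (fun _ => True) n.-1 (d n) pn.
  by apply: le_trans h _; rewrite Bset_unit mule1 /f -EFinM.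
have fin : (\sum_(0 <= k <oo) f k < +oo)%E.
  rewrite (nneseries_recl (P := xpredT) (fun k _ => f0 k)) //.
  rewrite lte_add_pinfty //; first by rewrite /f ltry.
  by rewrite ltey.
have tl := nneseries_tail_cvg fin (fun k _ => f0 k).
have tl2 := cvgeZl (y := 2%:E) (isT : (2%:E : \bar R) \is a fin_num) tl.
rewrite mule0 in tl2.
apply/eqP; rewrite eq_le measure_ge0 andbT.
have : (lebesgue_measure S <= lim ((2%:E * \sum_(N <= k <oo) f k)%E @[N --> \oo]))%E.
  apply: lime_ge; first by apply/cvg_ex; eexists; exact: tl2.
  by exists 1%N => // N; exact: bound.
by rewrite (cvg_lim _ tl2).
Qed.

Definition PN (d : nat -> nat) (N : nat) (s : seq nat) : Prop :=
  forall i, (N <= i)%N -> (i < size s)%N -> nth 0%N s i <> d i.+1.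

Lemma NH_step {R : realType} d N M : (N <= M)%N ->
  (Bset (PN d N) M.+1 None : set R) =
  Bset (PN d N) M None `\` Bset (PN d N) M (Some (d M.+1)).
Proof.
move=> NM; apply/seteqP; split => x /=.
  move=> [x01 [P1 _]]; split.
    split => //; split => // i Ni; rewrite size_dig => iM.
    have := P1 i Ni; rewrite digS nth_rcons size_dig iM size_rcons size_dig; apply.
    exact: ltnW.
  move=> [_ [_ e]]; have := P1 M NM; rewrite digS nth_rcons size_dig ltnn eqxx size_rcons size_dig.
  by apply.
move=> [[x01 [P0 _]] nk]; split => //; split => // i Ni; rewrite digS size_rcons size_dig ltnS.
rewrite leq_eqVlt => /predU1P[->|iM].
  rewrite nth_rcons size_dig ltnn eqxx => e; apply: nk; split => //.
rewrite nth_rcons size_dig iM; apply: P0 => //; by rewrite size_dig.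
Qed.

Lemma step_ineq {R : realType} (b bk s c : R) : 0 <= s -> 0 <= c -> c <= 1 -> 0 <= b ->
  b <= (1 + s)^-1 -> c * b <= bk -> b - bk <= (1 + s + c)^-1.
Proof.
move=> s0 c0 c1 b0 bs cb.
set t := (1 + s)^-1 in bs.
have t1 : t * (1 + s) = 1 by rewrite mulVf //; lra.
have t0 : 0 < t by rewrite invr_gt0; lra.
have tle1 : t <= 1 by rewrite invf_le1; lra.
have h1 : b - bk <= (1 - c) * t by nra.
apply: le_trans h1 _.
rewrite -div1r ler_pdivlMr; last lra.
nra.
Qed.

Definition cc {R : realType} (d : nat -> nat) (i : nat) : R := (4 * (d i.+1)%:R ^+ 2)^-1.

Lemma NH_bound {R : realType} (d : nat -> nat) : (forall n, (1 <= n)%N -> prime (d n)) ->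
  forall N m, (lebesgue_measure (Bset (PN d N) (N + m) None : set R) <=
    ((1 + \sum_(N <= i < N + m) cc d i)^-1)%:E)%E.
Proof.
move=> hd N; elim=> [|m IH].
  by rewrite addn0 big_geq // addr0 invr1; exact: Bset_le1.
rewrite addnS (NH_step (R:=R) d N (N + m) (leq_addr m N)).
set B := Bset (PN d N) (N + m) None.
have pk : (0 < d (N + m).+1)%N by apply: prime_gt0; exact: hd.
set Bk := Bset (PN d N) (N + m) (Some (d (N + m).+1)).
have Bm : measurable (B : set R) by exact: (proj1 (Bset_dec (R:=R) (PN d N) (N + m) None isT)).
have Bkm : measurable (Bk : set R) by exact: (proj1 (Bset_dec (R:=R) (PN d N) (N + m) (Some (d (N + m).+1)) pk)).
have B1 : (lebesgue_measure (B : set R) <= 1)%E by exact: Bset_le1.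
have Bk1 : (lebesgue_measure (Bk : set R) <= 1)%E by exact: Bset_le1.
have Bfin : (lebesgue_measure (B : set R) < +oo)%E by apply: le_lt_trans B1 _; rewrite ltry.
have BkB : (B : set R) `&` Bk = Bk.
  by apply/setIidr => x [x01 [P _]]; split.
rewrite measureD // BkB.
have [_ rat] := Bset_ratio (R:=R) (PN d N) (N + m) (d (N + m).+1) pk.
rewrite -/B -/Bk in rat.
have B0 : (0 <= lebesgue_measure (B : set R))%E by exact: measure_ge0.
have Bk0 : (0 <= lebesgue_measure (Bk : set R))%E by exact: measure_ge0.
rewrite big_nat_recr /= ?leq_addr //.
move: IH B0 B1 Bk0 Bk1 rat; rewrite -/B.
case: (lebesgue_measure (B : set R)) => [b| |] //; case: (lebesgue_measure (Bk : set R)) => [bk| |] //.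
rewrite !lee_fin => IH b0 b1 bk0 bk1 rat.
have c0 : 0 <= cc d (N + m) :> R by rewrite /cc invr_ge0 mulr_ge0 // exprn_ge0.
have c1 : cc d (N + m) <= 1 :> R.
  have e1 : 1 <= (d (N + m).+1)%:R ^+ 2 :> R by rewrite exprn_ege1 // ler1n.
  rewrite /cc invf_le1; first lra.
  apply: mulr_gt0 => //; lra.
have s0 : 0 <= \sum_(N <= i < N + m) cc d i :> R.
  by apply: sumr_ge0 => i _; rewrite /cc invr_ge0 mulr_ge0 // exprn_ge0.
by rewrite addrA; apply: step_ineq.
Qed.

Lemma div_small {R : realType} (d : nat -> nat) :
  (\sum_(1 <= n <oo) (((d n)%:R ^+ 2)^-1 : R)%:E == +oo)%E ->
  forall N (eps : R), 0 < eps -> exists m, (1 + \sum_(N <= i < N + m) cc d i)^-1 <= eps.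
Proof.
move=> /eqP hs N eps e0.
pose g n : R := ((d n)%:R ^+ 2)^-1.
have g0 : forall n, 0 <= g n by move=> n; rewrite /g invr_ge0 exprn_ge0.
pose u m := (\sum_(1 <= n < m) (g n)%:E)%E.
have hc : cvgn u.
  apply: ereal_nondecreasing_is_cvgn; apply: lee_sum_nneg_natr => n _ _.
  by rewrite lee_fin.
have hu : u @ \oo --> +oo%E.
  by have := hc; rewrite /u hs.
pose A := \sum_(1 <= n < N.+1) g n + 4 / eps.
have [m0 _ Hm] := proj1 (cvgeyPge u) hu A.
exists m0.
have Hm' := Hm (N + m0).+1 (ltac:(rewrite /=; apply: leqW; exact: leq_addl)).
move: Hm'; rewrite /u sumEFin lee_fin => Hm'.
have E : \sum_(N <= i < N + m0) cc d i = 4^-1 * (\sum_(1 <= n < (N + m0).+1) g n - \sum_(1 <= n < N.+1) g n).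
  rewrite (big_cat_nat _ (n := N.+1) (m := 1) (p := (N + m0).+1)) //=; last by rewrite ltnS leq_addr.
  rewrite addrC addrK big_add1 /= mulr_sumr; apply: eq_bigr => i _.
  by rewrite /cc /g invfM.
rewrite E.
have h : 4 / eps <= \sum_(1 <= n < (N + m0).+1) g n - \sum_(1 <= n < N.+1) g n by rewrite /A in Hm'; lra.
have h2 : eps^-1 <= 4^-1 * (\sum_(1 <= n < (N + m0).+1) g n - \sum_(1 <= n < N.+1) g n).
  rewrite -(ler_pM2l (ltac:(lra) : (0:R) < 4)) mulrA mulfV ?mul1r //; lra.
rewrite -[eps]invrK lef_pV2 ?posrE; try lra.
- have : 0 < eps^-1 by rewrite invr_gt0.
  lra.
- by rewrite invr_gt0.
Qed.

Lemma NH_null {R : realType} (d : nat -> nat) : (forall n, (1 <= n)%N -> prime (d n)) ->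
  (\sum_(1 <= n <oo) (((d n)%:R ^+ 2)^-1 : R)%:E == +oo)%E ->
  forall N, lebesgue_measure (\bigcap_M (Bset (PN d N) M None : set R)) = 0%E.
Proof.
move=> hd hs N.
have Mm : forall M, measurable (Bset (PN d N) M None : set R).
  by move=> M; exact: (proj1 (Bset_dec (R:=R) _ M None isT)).
apply/eqP; rewrite eq_le measure_ge0 andbT.
apply/lee_addgt0Pr => e e0; rewrite add0e.
have [m hm] := div_small d hs N e e0.
have h1 : (lebesgue_measure (\bigcap_M (Bset (PN d N) M None : set R)) <=
    lebesgue_measure (Bset (PN d N) (N + m) None : set R))%E.
  by apply: le_measure; rewrite ?inE; [exact: bigcapT_measurable | exact: Mm | move=> x; apply].
apply: le_trans h1 _.
apply: le_trans (NH_bound (R:=R) d hd N m) _.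
by rewrite lee_fin.
Qed.

Lemma div_case {R : realType} (d : nat -> nat) : (forall n, (1 <= n)%N -> prime (d n)) ->
  (\sum_(1 <= n <oo) (((d n)%:R ^+ 2)^-1 : R)%:E == +oo)%E ->
  lebesgue_measure (\bigcap_N \bigcup_n Gev (R:=R) d N n) = 1%E.
Proof.
move=> hd hs.
set S := \bigcap_N \bigcup_n Gev (R:=R) d N n.
set U : set R := Bset (fun _ => True) 0 None.
have Sm : measurable S.
  by apply: bigcapT_measurable => N; apply: bigcupT_measurable => n; exact: Gev_meas.
have Um : measurable U by exact: (proj1 (Bset_dec (R:=R) _ 0 None isT)).
have SU : S `<=` U.
  move=> x Sx; have [n _] := Sx 0%N I; rewrite /Gev; case: ifP => // _ [x01 _].
  by split.
pose V := \bigcup_N \bigcap_M (Bset (PN d N) M None : set R).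
have Mm : forall N M, measurable (Bset (PN d N) M None : set R).
  by move=> N M; exact: (proj1 (Bset_dec (R:=R) _ M None isT)).
have Vm : measurable V.
  by apply: bigcupT_measurable => N; apply: bigcapT_measurable => M; exact: Mm.
have CV : U `\` S `<=` V.
  move=> x [[x01 _] nS].
  have [N hN] : exists N, ~ (\bigcup_n Gev (R:=R) d N n) x.
    by apply/existsNP => h; apply: nS => N _; exact: h.
  exists N => // M _; split => //; split => // i Ni; rewrite size_dig => iM.
  rewrite nth_dig // => e; apply: hN; exists i.+1 => //.
  rewrite /Gev; have -> : (N <= i.+1)%N by exact: leqW.
  by split => //; split.
have V0 : lebesgue_measure V = 0%E.
  apply/eqP; rewrite eq_le measure_ge0 andbT.
  apply: le_trans (@measure_sigma_subadditive _ _ _ lebesgue_measure V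
    (fun N => \bigcap_M (Bset (PN d N) M None : set R)) _ Vm _) _.
  - by move=> N; apply: bigcapT_measurable => M; exact: Mm.
  - by [].
  by rewrite eseries0 // => N _ _; exact: NH_null.
have C0 : lebesgue_measure (U `\` S) = 0%E.
  apply/eqP; rewrite eq_le measure_ge0 andbT -V0.
  by apply: le_measure; rewrite ?inE //; exact: measurableD.
have U1 : lebesgue_measure U = 1%E by exact: Bset_unit.
have Ufin : (lebesgue_measure U < +oo)%E.
  by apply: le_lt_trans (Bset_le1 (R:=R) (fun _ => True) 0 None isT) _; rewrite ltry.
move: C0; rewrite measureD // (setIidr SU).
change ((lebesgue_measure U - lebesgue_measure S)%E = 0%E -> lebesgue_measure S = 1%E); rewrite U1.
have S1 : (lebesgue_measure S <= 1)%E.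
  by rewrite -U1; apply: le_measure; rewrite ?inE.
have S0 : (0 <= lebesgue_measure S)%E by exact: measure_ge0.
move: S0 S1; case: (lebesgue_measure S) => [s| |] // _ _.
by rewrite -EFinB => /eqP; rewrite eqe subr_eq0 => /eqP <-.
Qed.

Theorem theorem2p1 (R : realType) (d : nat -> nat)
    (hd : forall n : nat, (1 <= n)%N -> prime (d n)) :
  (lebesgue_measure : set R -> \bar R)
    [set x : R | 0 < x <= 1 /\
       forall N : nat, exists n : nat, (N <= n)%N /\ (1 <= n)%N /\
         prime_digit n x = d n]
  = (if (\sum_(1 <= n <oo) (((d n)%:R ^+ 2)^-1 : R)%:E == +oo)%E
     then 1%E else 0%E).
Proof.
rewrite (target_eq (R:=R) d hd).
case: ifP => hs.
- exact: div_case.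
- by apply: conv_case => //; rewrite hs.
Qed.
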